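(* Fix $\ell\geq2$, let $A=\ell\times\omega$, and fix a recursive bijection $\psi:(\ell-1)\times\omega\times\omega\to\omega$. For $\alpha\in\{0,1\}^\omega$ define $S_\alpha$ on $A$ by: $S_\alpha(a,b)$ holds iff $a=(i,n)$, $b=(i+1,m)$ for some $i<\ell-1$ with $\alpha_{\psi(i,n,m)}=1$. Let $G$ be the set of $\alpha$ such that $\langle A,S_\alpha,\{0\}\times\omega,\ldots,\{\ell-1\}\times\omega\rangle$ is a model of $T_\ell$. Then $\lambda(G)=1$, i.e. with probability $1$ a sequence $\alpha$ defines a generic $\ell$-diagram.
   Context: $\lambda$ is the uniform (fair-coin product) probability measure on $\{0,1\}^\omega$, under which the bits $\alpha_i$ are independent and each equals $1$ with probability $1/2$. The signature has unary relations $L_0,\ldots,L_{\ell-1}$ and binary $S$. The theory $T_\ell$: (i) every $x$ satisfies some $L_j(x)$; (ii) no $x$ satisfies $L_i(x)\wedge L_j(x)$ for $i<j$; (iii) $S(x,y)$ and $L_i(x)$ with $i\le\ell-2$ imply $L_{i+1}(y)$; (iv) for each $i<\ell$ and all finite $X,Y\subseteq L_{i+1}$ with $X\cap Y=\emptyset$, $Z\subseteq L_i$, $X',Y'\subseteq L_{i-1}$ with $X'\cap Y'=\emptyset$ ($L_{-1},L_\ell$ read as empty), there is $z\in L_i\setminus Z$ with $S(z,x)$ for $x\in X$, $S(x',z)$ for $x'\in X'$, $\neg S(z,y)$ for $y\in Y$, $\neg S(y',z)$ for $y'\in Y'$. Countable models of $T_\ell$ are called generic $\ell$-diagrams. *)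

(* Defs.v *)
From HB Require Import structures.
From mathcomp Require Import all_boot all_order all_algebra.
From mathcomp Require Import all_classical all_reals all_analysis.
Set Implicit Arguments. Unset Strict Implicit. Unset Printing Implicit Defensive.
Import Order.TTheory GRing.Theory Num.Theory.
Local Open Scope classical_set_scope.
Local Open Scope ring_scope.

Definition cylinder (s : seq bool) : set cantor_space :=
  [set a : cantor_space | forall i, (i < size s)%N -> a i = nth false s i].

Definition cylinders : set (set cantor_space) := range cylinder.

(* {0,1}^omega with the sigma-algebra generated by the cylinders
   (= the Borel sigma-algebra of the Cantor space) *)
Definition CantorM : Type := g_sigma_algebraType cylinders.

(* P is the uniform (fair-coin product) measure: the bits are independent
   and each equals 1 with probability 1/2, i.e. every cylinder of length n
   has measure 2^-n.  This determines the measure uniquely on CantorM. *)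
Definition fair_coin (R : realType)
    (P : probability CantorM R) : Prop :=
  forall s : seq bool, P (cylinder s) = ((2%:R : R) ^- size s)%:E.

(* L_{i+1}, read as empty when i+1 = l *)
Definition Lup (l : nat) {U : Type} (L : nat -> set U) (i : nat) : set U :=
  [set x | (i.+1 < l)%N /\ L i.+1 x].
(* L_{i-1}, read as empty when i = 0 *)
Definition Ldown {U : Type} (L : nat -> set U) (i : nat) : set U :=
  [set x | (0 < i)%N /\ L i.-1 x].

(* <U, S, L_0, ..., L_{l-1}> is a model of T_l (only L j with j < l is part
   of the signature; L j for j >= l is never used) *)
Definition model_T (l : nat) {U : Type} (L : nat -> set U)
    (S : U -> U -> Prop) : Prop :=
  [/\ (forall x, exists2 j, (j < l)%N & L j x),
      (forall x i j, (i < j)%N -> (j < l)%N -> ~ (L i x /\ L j x)),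
      (forall x y i, (i <= l - 2)%N -> S x y -> L i x -> L i.+1 y) &
      (* (iv) *)
      (forall i, (i < l)%N ->
        forall X Y Z X' Y' : set U,
          finite_set X -> finite_set Y -> finite_set Z ->
          finite_set X' -> finite_set Y' ->
          X `<=` Lup l L i -> Y `<=` Lup l L i -> X `&` Y = set0 ->
          Z `<=` L i ->
          X' `<=` Ldown L i -> Y' `<=` Ldown L i -> X' `&` Y' = set0 ->
          exists z, [/\ L i z, ~ Z z,
            (forall x, X x -> S z x) /\ (forall x', X' x' -> S x' z),
            (forall y, Y y -> ~ S z y) & (forall y', Y' y' -> ~ S y' z)])].

Definition Lstd (l : nat) (j : nat) : set ('I_l * nat) :=
  [set a | nat_of_ord a.1 = j].

Definition S_alpha (l : nat) (psi : 'I_l.-1 * nat * nat -> nat)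
    (alpha : nat -> bool) (a b : 'I_l * nat) : Prop :=
  exists i : 'I_l.-1,
    [/\ nat_of_ord a.1 = nat_of_ord i, nat_of_ord b.1 = (nat_of_ord i).+1 &
        alpha (psi (i, a.2, b.2)) = true].

Definition Ggen (l : nat) (psi : 'I_l.-1 * nat * nat -> nat) : set CantorM :=
  [set alpha : CantorM |
     model_T l (@Lstd l) (S_alpha psi (alpha : cantor_space))].

(* Main.v *)
Require Import Defs.
From HB Require Import structures.
From mathcomp Require Import all_boot all_order all_algebra.
From mathcomp Require Import all_classical all_reals all_analysis.
From mathcomp Require Import ring lra zify.
From Stdlib Require Import Lia.
Import Order.TTheory GRing.Theory Num.Theory.
Local Open Scope classical_set_scope.
Local Open Scope ring_scope.

Lemma cyl_meas (w : seq bool) : measurable (cylinder w : set CantorM).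
Proof. by apply: sub_sigma_algebra; exists w. Qed.

Definition useq (c : nat) : seq bool := odflt [::] (unpickle c).

Lemma bit_meas (p : nat) (b : bool) :
  measurable [set a : CantorM | a p = b].
Proof.
have -> : [set a : CantorM | a p = b] =
  \bigcup_c (if size (useq c) == p then cylinder (rcons (useq c) b) else set0).
  apply/seteqP; split => a /=.
    move=> hab; exists (pickle [seq a j | j <- iota 0 p]) => //.
    rewrite /useq pickleK /= size_map size_iota eqxx => i.
    rewrite size_rcons size_map size_iota ltnS nth_rcons size_map size_iota.
    case: ltngtP => // [hi|->] _; last by rewrite hab.
    by rewrite (nth_map 0) ?size_iota // nth_iota.
  case=> c _; case: eqP => // hs /(_ p); rewrite size_rcons hs ltnSn nth_rcons hs ltnn eqxx.
  by apply.
apply: bigcupT_measurable => c; case: eqP => _ //; exact: cyl_meas.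
Qed.

Lemma mimp (Q : Prop) (A : set CantorM) :
  measurable A -> measurable [set a | Q -> A a].
Proof.
move=> mA; have [q|nq] := pselect Q.
  by have -> : [set a | Q -> A a] = A by apply/seteqP; split => a /=; [apply| move=> ? ?].
by have -> : [set a | Q -> A a] = setT by apply/seteqP; split => a //= _.
Qed.

Lemma mall (A : nat -> set CantorM) :
  (forall n, measurable (A n)) -> measurable [set a | forall n, A n a].
Proof.
move=> mA; have -> : [set a | forall n, A n a] = \bigcap_n A n.
  by apply/seteqP; split => a /=; [move=> h n _; exact: h|move=> h n; exact: h].
exact: bigcapT_measurable.
Qed.

Lemma mex (A : nat -> set CantorM) :
  (forall n, measurable (A n)) -> measurable [set a | exists n, A n a].
Proof.
move=> mA; have -> : [set a | exists n, A n a] = \bigcup_n A n.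
  by apply/seteqP; split => a /= [n h]; exists n.
exact: bigcupT_measurable.
Qed.

Lemma mand (A B : set CantorM) :
  measurable A -> measurable B -> measurable [set a | A a /\ B a].
Proof. by move=> mA mB; apply: measurableI. Qed.

Definition Bset (L : seq (nat * bool)) : set CantorM :=
  [set a | all (fun c => a c.1 == c.2) L].

Lemma Bset_meas L : measurable (Bset L).
Proof.
elim: L => [|c L IH]; first by have -> : Bset [::] = setT by apply/seteqP; split.
have -> : Bset (c :: L) = [set a : CantorM | a c.1 = c.2] `&` Bset L.
  apply/seteqP; split => a /=; rewrite /Bset /=.
    by case/andP => /eqP.
  by case=> -> ->; rewrite eqxx.
by apply: measurableI => //; exact: bit_meas.
Qed.
Section Prob.
Variables (R : realType) (P : probability CantorM R) (hP : fair_coin P).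

Definition hh : R := 2^-1.
Definition pr (X : set CantorM) : R := fine (P X).

Lemma prE X : measurable X -> P X = (pr X)%:E.
Proof. by move=> mX; rewrite /pr fineK //; exact: fin_num_measure. Qed.

Lemma pr_ge0 X : measurable X -> 0 <= pr X.
Proof. by move=> mX; rewrite -lee_fin -prE //. Qed.

Lemma pr0 : pr set0 = 0.
Proof. by rewrite /pr measure0. Qed.

Lemma prU A B : measurable A -> measurable B -> A `&` B = set0 ->
  pr (A `|` B) = pr A + pr B.
Proof.
move=> mA mB AB; apply/EFin_inj; rewrite EFinD -!prE //; last exact: measurableU.
exact: measureU.
Qed.

Lemma prle A B : measurable A -> measurable B -> A `<=` B -> pr A <= pr B.
Proof.
move=> mA mB AB; rewrite -lee_fin -!prE //; apply: le_measure => //; exact/mem_set.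
Qed.

Lemma pr_cyl w : pr (cylinder w) = hh ^+ size w.
Proof. by rewrite /pr hP /hh exprVn. Qed.

Lemma cyl_split w : cylinder w = cylinder (rcons w false) `|` cylinder (rcons w true).
Proof.
apply/seteqP; split => a /=.
  move=> ha; case hb: (a (size w)); [right|left] => i; rewrite size_rcons ltnS nth_rcons;
    (case: ltngtP => // [hi|->] _; [exact: ha|by rewrite ?eqxx]).
by case=> ha i hi; have := ha i; rewrite size_rcons nth_rcons hi ltnS => ->//; exact: ltnW.
Qed.

Lemma cyl_disj w (X : set CantorM) : (cylinder (rcons w false) `&` X) `&` (cylinder (rcons w true) `&` X) = set0.
Proof.
apply/seteqP; split => a //= [[h1 _] [h2 _]].
have := h1 (size w); have := h2 (size w).
rewrite !size_rcons !ltnSn !nth_rcons !ltnn !eqxx => H2 H1.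
by have := H1 isT; rewrite H2.
Qed.

Lemma pr_split w (X : set CantorM) : measurable X ->
  pr (cylinder w `&` X) = pr (cylinder (rcons w false) `&` X) + pr (cylinder (rcons w true) `&` X).
Proof.
move=> mX; rewrite -prU; [| | |exact: cyl_disj]; try exact: measurableI (cyl_meas _) mX.
by rewrite -setIUl -cyl_split.
Qed.

Lemma hh_ge0 : 0 <= hh. Proof. by rewrite /hh invr_ge0. Qed.
Lemma hh_le1 : hh <= 1. Proof. by rewrite /hh invf_le1 // ler1n. Qed.
Lemma hh2 n : hh ^+ n.+1 + hh ^+ n.+1 = hh ^+ n.
Proof. rewrite exprS -mulrDl; have -> : hh + hh = 1 by rewrite /hh; field. by rewrite mul1r. Qed.
Lemma hh_mono m n : (m <= n)%N -> hh ^+ n <= hh ^+ m.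
Proof. move=> mn; apply: ler_wiXn2l => //; [exact: hh_ge0|exact: hh_le1]. Qed.


Definition consistent (L : seq (nat * bool)) :=
  forall c c', c \in L -> c' \in L -> c.1 = c'.1 -> c.2 = c'.2.

Lemma cnt_split (n : nat) (L : seq (nat * bool)) :
  count (fun c => n <= c.1)%N L = (count (fun c => n < c.1)%N L + count (fun c => c.1 == n) L)%N.
Proof.
elim: L => //= c L ->.
by case: ltngtP => _ /=; rewrite ?add0n ?add1n ?addSn ?addnS.
Qed.

Lemma P6_base L w : (forall c, c \in L -> c.1 < size w)%N ->
  (forall c, c \in L -> (c.1 < size w)%N -> nth false w c.1 = c.2) ->
  hh ^+ (size w + count (fun c => size w <= c.1)%N L) <= pr (cylinder w `&` Bset L).
Proof.
move=> hT hw.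
have -> : cylinder w `&` Bset L = cylinder w.
  apply/seteqP; split => a; first by case.
  move=> ha; split => //; apply/allP => c cL; apply/eqP; rewrite ha ?hw //; exact: hT.
rewrite pr_cyl; apply: hh_mono; exact: leq_addr.
Qed.

Lemma P6 T L : (forall c, c \in L -> c.1 < T)%N -> consistent L ->
  forall d w, (T <= size w + d)%N ->
  (forall c, c \in L -> (c.1 < size w)%N -> nth false w c.1 = c.2) ->
  hh ^+ (size w + count (fun c => size w <= c.1)%N L) <= pr (cylinder w `&` Bset L).
Proof.
move=> hT hL; elim=> [|d IH] w hd hw.
  apply: P6_base => // c cL; apply: leq_trans (hT c cL) _; by rewrite addn0 in hd.
have [Tw|wT] := leqP T (size w).
  by apply: P6_base => // c cL; apply: leq_trans (hT c cL) _.
have hd' b : (T <= size (rcons w b) + d)%N by rewrite size_rcons addSn -addnS.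
rewrite (pr_split w _ (Bset_meas L)).
have [/hasP [c cL /eqP cw]|/hasPn nc] := boolP (has (fun c => c.1 == size w) L).
  have IHb := IH (rcons w c.2) (hd' _).
  have hw' : forall c', c' \in L -> (c'.1 < size (rcons w c.2))%N ->
      nth false (rcons w c.2) c'.1 = c'.2.
    move=> c' c'L; rewrite size_rcons ltnS nth_rcons leq_eqVlt.
    case/orP => [/eqP e|lt]; last by rewrite lt hw.
    by rewrite e ltnn eqxx (hL c c') // e cw.
  have := IHb hw'; rewrite size_rcons => {}IHb.
  have cnt : ((count (fun c => size w < c.1)%N L).+1 <= count (fun c => size w <= c.1)%N L)%N.
    have : (0 < count (fun c => c.1 == size w) L)%N.
      by rewrite -has_count; apply/hasP; exists c => //; apply/eqP.
    by move=> HH; rewrite (cnt_split (size w)) -[X in (X <= _)%N]addn1 leq_add2l.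
  have le1 : hh ^+ (size w + count (fun c => size w <= c.1)%N L) <= hh ^+ ((size w).+1 + count (fun c => size w < c.1)%N L).
    by apply: hh_mono; rewrite addSn -addnS leq_add2l.
  have ge0 b : 0 <= pr (cylinder (rcons w b) `&` Bset L).
    by apply: pr_ge0; apply: measurableI; [exact: cyl_meas|exact: Bset_meas].
  by case: c cL cw {cnt hw'} IHb le1 => c1 [] /= _ _ IHb le1; move: (ge0 true) (ge0 false); lra.
have hw' b : forall c', c' \in L -> (c'.1 < size (rcons w b))%N ->
      nth false (rcons w b) c'.1 = c'.2.
  move=> c' c'L; rewrite size_rcons ltnS nth_rcons leq_eqVlt.
  case/orP => [/eqP e|lt]; last by rewrite lt hw.
  by have := nc c' c'L; rewrite e eqxx.
have cnt : count (fun c => size w <= c.1)%N L = count (fun c => size w < c.1)%N L.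
  rewrite cnt_split; have -> : count (fun c => c.1 == size w) L = 0%N; last by rewrite addn0.
  by apply/eqP; rewrite -leqn0 leqNgt -has_count; apply/hasPn.
have := IH _ (hd' false) (hw' false); have := IH _ (hd' true) (hw' true).
rewrite !size_rcons cnt -(hh2 (size w + _)) addSn.
lra.
Qed.

Definition det (M : nat) (E : set CantorM) :=
  forall a b : CantorM, (forall p, (p < M)%N -> a p = b p) -> E a -> E b.

Lemma P5 M T E L : measurable E -> det M E -> consistent L ->
  (forall c, c \in L -> (M <= c.1)%N /\ (c.1 < T)%N) ->
  forall d w, M = (size w + d)%N ->
  hh ^+ size L * pr (cylinder w `&` E) <= pr (cylinder w `&` (E `&` Bset L)).
Proof.
move=> mE dE hL hLT; elim=> [|d IH] w hM.
  rewrite addn0 in hM.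
  have [[a [wa Ea]]|none] := pselect (exists a, cylinder w a /\ E a).
    have sub : cylinder w `<=` E.
      move=> b wb; apply: (dE a) => // p pM; rewrite wa ?wb //; by rewrite -hM.
    have -> : cylinder w `&` E = cylinder w.
      by apply/seteqP; split => x; [case| move=> h; split => //; exact: sub].
    have -> : cylinder w `&` (E `&` Bset L) = cylinder w `&` Bset L.
      apply/seteqP; split => x /=; first by case=> ? [].
      by case=> h1 h2; split => //; split => //; exact: sub.
    have := @P6 T L (fun c cL => (hLT c cL).2) hL T w (leq_addl _ _).
    have hw : forall c, c \in L -> (c.1 < size w)%N -> nth false w c.1 = c.2.
      move=> c cL; have := (hLT c cL).1; rewrite -hM => h1 h2.
      by have := leq_trans h2 h1; rewrite ltnn.
    move=> /(_ hw) H; apply: le_trans H; rewrite pr_cyl -exprD; apply: hh_mono.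
    by rewrite addnC leq_add2r count_size.
  have -> : cylinder w `&` E = set0.
    by apply/seteqP; split => x // [h1 h2]; apply: none; exists x.
  rewrite pr0 mulr0; apply: pr_ge0; apply: measurableI; first exact: cyl_meas.
  apply: measurableI => //; exact: Bset_meas.
rewrite (pr_split w _ mE) (pr_split w _ (measurableI _ _ mE (Bset_meas L))) mulrDr.
by apply: lerD; apply: IH; rewrite size_rcons addSn -addnS.
Qed.

Lemma P5' M T E L : measurable E -> det M E -> consistent L ->
  (forall c, c \in L -> (M <= c.1)%N /\ (c.1 < T)%N) ->
  hh ^+ size L * pr E <= pr (E `&` Bset L).
Proof.
move=> mE dE hL hLT; have := @P5 M T E L mE dE hL hLT M [::] (esym (add0n M)).
suff cT : cylinder [::] = setT by rewrite cT !setTI.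
by apply/seteqP; split => a.
Qed.

Lemma bndL (L : seq (nat * bool)) : exists T, forall c, c \in L -> (c.1 < T)%N.
Proof.
elim: L => [|c L [T hT]]; first by exists 0%N.
exists (maxn T c.1.+1) => c'; rewrite in_cons => /orP [/eqP ->|/hT h].
  by rewrite leq_max leqnn orbT.
by rewrite leq_max h.
Qed.

Lemma pr_setT : pr setT = 1.
Proof. by rewrite /pr probability_setT. Qed.

Lemma lim_small (x q : R) : 0 < q -> q <= 1 -> (forall j, x <= (1 - q) ^+ j) -> x <= 0.
Proof.
move=> q0 q1 hj.
have H : `|1 - q| < 1 by rewrite ger0_norm ?subr_ge0 // ltrBlDr ltrDl.
rewrite leNgt; apply/negP => x0.
have := cvgr_lt _ (cvg_expr H) _ x0.
case=> N _ hN; have := hN N (leqnn N) => /=.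
by rewrite ltNge hj.
Qed.

Lemma P7 (F : set CantorM) (K : nat) (Lf : nat -> seq (nat * bool)) :
  measurable F ->
  (forall n, consistent (Lf n)) -> (forall n, (size (Lf n) <= K)%N) ->
  (forall M, exists n, (forall c, c \in Lf n -> (M <= c.1)%N) /\ F `<=` ~` Bset (Lf n)) ->
  pr F = 0.
Proof.
move=> mF hc hK hM.
pose q := hh ^+ K.
have q0 : 0 < q by rewrite /q exprn_gt0 // /hh invr_gt0.
have q1 : q <= 1 by rewrite /q exprn_ile1 //; [exact: hh_ge0|exact: hh_le1].
have iter : forall j, exists M E, [/\ measurable E, det M E, F `<=` E & pr E <= (1 - q) ^+ j].
  elim=> [|j [M [E [mE dE FE pE]]]].
    exists 0%N, setT; split => //; by rewrite pr_setT expr0.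
  have [n [hn Fn]] := hM M; have [T hT] := bndL (Lf n).
  exists (maxn M T), (E `&` ~` Bset (Lf n)); split.
  - by apply: measurableI => //; apply: measurableC; exact: Bset_meas.
  - move=> a b hab [Ea nBa]; split.
      by apply: (dE a) => // p pM; apply: hab; rewrite leq_max pM.
    move=> Bb; apply: nBa; apply/allP => c cL; move/allP: Bb => /(_ c cL).
    by rewrite hab // leq_max hT ?orbT.
  - by move=> x Fx; split; [exact: FE|exact: Fn].
  have mB := Bset_meas (Lf n).
  have h2 : pr E = pr (E `&` Bset (Lf n)) + pr (E `&` ~` Bset (Lf n)).
    rewrite -prU; first by rewrite -setIUr setUv setIT.
    + exact: measurableI.
    + by apply: measurableI => //; exact: measurableC.
    + by apply/seteqP; split => x // [[_ h1] [_ h3]].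
  have h1 : q * pr E <= pr (E `&` Bset (Lf n)).
    have H5 := @P5' M T E (Lf n) mE dE (hc n) (fun c cL => conj (hn c cL) (hT c cL)).
    apply: le_trans H5; apply: ler_wpM2r; first exact: pr_ge0.
    exact: hh_mono.
  have h3 : (1 - q) * pr E <= (1 - q) ^+ j.+1.
    by rewrite exprS; apply: ler_wpM2l => //; rewrite subr_ge0.
  rewrite mulrBl mul1r in h3.
  lra.
apply/eqP; rewrite eq_le pr_ge0 // andbT; apply: (@lim_small _ q q0 q1) => j.
have [M [E [mE _ FE pE]]] := iter j.
by apply: le_trans pE; apply: prle.
Qed.
End Prob.

Section Main.
Variable k : nat.
Variable psi : 'I_k.+1 * nat * nat -> nat.

Definition blk i N (s t : nat -> bool) n (a : CantorM) : Prop :=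
  forall m, (m < N)%N ->
    ((i < k.+1)%N -> a (psi (inord i, n, m)) = s m) /\
    ((0 < i)%N -> a (psi (inord i.-1, m, n)) = t m).

Definition good i N (s t : nat -> bool) : set CantorM :=
  [set a | (i < k.+2)%N -> exists n, (N <= n)%N /\ blk i N s t n a].

Definition pat (c : nat) (m : nat) : bool := nth false (useq c) m.

Lemma pat_ex (s : nat -> bool) N : exists c, forall m, (m < N)%N -> pat c m = s m.
Proof.
exists (pickle [seq s m | m <- iota 0 N]) => m mN.
by rewrite /pat /useq pickleK /= (nth_map 0) ?size_iota // nth_iota.
Qed.

Lemma mandP (Q : Prop) (A : set CantorM) :
  measurable A -> measurable [set a | Q /\ A a].
Proof.
move=> mA; have [q|nq] := pselect Q.
  by have -> : [set a | Q /\ A a] = A by apply/seteqP; split => a /=; [case| split].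
by have -> : [set a | Q /\ A a] = set0 by apply/seteqP; split => a //= [].
Qed.

Lemma good_meas i N s t : measurable (good i N s t).
Proof.
apply: mimp; apply: mex => n; apply: mandP; apply: mall => m; apply: mimp.
by apply: mand; apply: mimp; exact: bit_meas.
Qed.

Lemma G_sub (a : CantorM) i N s t :
  Ggen (l := k.+2) psi a -> good i N s t a.
Proof.
case=> _ _ _ H4 il.
pose X := [set x : 'I_k.+2 * nat | nat_of_ord x.1 = i.+1 /\ (i.+1 < k.+2)%N /\ (x.2 < N)%N /\ s x.2].
pose Y := [set x : 'I_k.+2 * nat | nat_of_ord x.1 = i.+1 /\ (i.+1 < k.+2)%N /\ (x.2 < N)%N /\ ~~ s x.2].
pose Z := [set x : 'I_k.+2 * nat | nat_of_ord x.1 = i /\ (x.2 < N)%N].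
pose X' := [set x : 'I_k.+2 * nat | (0 < i)%N /\ nat_of_ord x.1 = i.-1 /\ (x.2 < N)%N /\ t x.2].
pose Y' := [set x : 'I_k.+2 * nat | (0 < i)%N /\ nat_of_ord x.1 = i.-1 /\ (x.2 < N)%N /\ ~~ t x.2].
have fB : finite_set [set x : 'I_k.+2 * nat | (x.2 < N)%N].
  apply: (@sub_finite_set _ _ (setT `*` `I_N)); last first.
    by apply: finite_setX; [exact: finite_finset|exact: finite_II].
  by move=> [x1 x2] /= h.
have [z [Lz nZ [hX hX'] hY hY']] := H4 i il X Y Z X' Y'
  (sub_finite_set (fun x h => proj1 (proj2 (proj2 h))) fB)
  (sub_finite_set (fun x h => proj1 (proj2 (proj2 h))) fB)
  (sub_finite_set (fun x h => proj2 h) fB)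
  (sub_finite_set (fun x h => proj1 (proj2 (proj2 h))) fB)
  (sub_finite_set (fun x h => proj1 (proj2 (proj2 h))) fB)
  (fun x h => conj (proj1 (proj2 h)) (proj1 h))
  (fun x h => conj (proj1 (proj2 h)) (proj1 h))
  ltac:(by apply/seteqP; split => x // [[_ [_ [_ h1]]] [_ [_ [_ h2]]]]; rewrite h1 in h2)
  (fun x h => proj1 h)
  (fun x h => conj (proj1 h) (proj1 (proj2 h)))
  (fun x h => conj (proj1 h) (proj1 (proj2 h)))
  ltac:(by apply/seteqP; split => x // [[_ [_ [_ h1]]] [_ [_ [_ h2]]]]; rewrite h1 in h2).
rewrite /Lstd /= in Lz.
exists z.2; split.
  by rewrite leqNgt; apply/negP => zN; apply: nZ.
move=> m mN; split => hi.
  case hs: (s m).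
    have Xx : X (inord i.+1, m) by rewrite /X /= inordK.
    have [i0 [h1 h2 h3]] := hX _ Xx.
    have -> : (inord i : 'I_k.+1) = i0 by apply: val_inj; rewrite /= inordK // -h1.
    exact: h3.
  have Yy : Y (inord i.+1, m) by rewrite /Y /= inordK // hs.
  apply/negbTE/negP => hal; apply: (hY _ Yy); exists (inord i).
  by rewrite /= !inordK.
- have i1 : (i.-1 < k.+1)%N by rewrite prednK // -ltnS.
  case ht: (t m).
    have Xx : X' (inord i.-1, m) by rewrite /X' /= inordK // ltnW.
    have [i0 [h1 h2 h3]] := hX' _ Xx.
    have -> : (inord i.-1 : 'I_k.+1) = i0 by apply: val_inj; rewrite /= inordK // -h1 /= inordK // ltnW.
    exact: h3.
  have Yy : Y' (inord i.-1, m) by rewrite /Y' /= inordK ?ht // ltnW.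
  apply/negbTE/negP => hal; apply: (hY' _ Yy); exists (inord i.-1).
  by rewrite /= !inordK ?prednK // ltnW.
Qed.


Lemma fin_bound (A : set ('I_k.+2 * nat)) : finite_set A ->
  exists N, forall x, A x -> (x.2 < N)%N.
Proof.
move=> /finite_fsetP [F ->].
suff [N hN] : exists N, forall x, x \in (finmap.enum_fset F) -> (x.2 < N)%N.
  by exists N => x /= /hN.
elim: (finmap.enum_fset F) => [|c L [N hN]]; first by exists 0%N.
exists (maxn N c.2.+1) => x; rewrite in_cons => /orP [/eqP ->|/hN h].
  by rewrite leq_max leqnn orbT.
by rewrite leq_max h.
Qed.

Lemma sub_G (a : CantorM) :
  (forall i N c d, good i N (pat c) (pat d) a) -> Ggen (l := k.+2) psi a.
Proof.
move=> H; split.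
- by move=> x; exists (nat_of_ord x.1).
- by move=> x i j ij jl [/= hi hj]; move: ij; rewrite -hi -hj ltnn.
- by move=> x y i _ [i0 [h1 h2 _]]; rewrite /Lstd /= => hx; rewrite h2 -h1 hx.
move=> i il X Y Z X' Y' fX fY fZ fX' fY' XU YU XY ZL X'D Y'D X'Y'.
have fU : finite_set (X `|` Y `|` Z `|` X' `|` Y') by rewrite !finite_setU.
have [N hN] := @fin_bound _ fU.
pose s m := `[< X (inord i.+1, m) >].
pose t m := `[< X' (inord i.-1, m) >].
have [c hc] := pat_ex s N; have [d hd] := pat_ex t N.
have [n [Nn hb]] := H i N c d il.
have zi : nat_of_ord (inord i : 'I_k.+2) = i by rewrite inordK.
exists (inord i, n); split.
- by rewrite /Lstd /=.
- move=> Zz; have := hN _ (or_introl (or_introl (or_intror Zz))).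
  by rewrite /= ltnNge Nn.
- split.
  + move=> x Xx; have [i1 xi] := XU x Xx.
    have x2 : (x.2 < N)%N by apply: hN; left; left; left; left.
    have [h1 _] := hb _ x2.
    have ik : (i < k.+1)%N by rewrite -ltnS.
    have ex : (inord i.+1, x.2) = x.
      by case: x Xx xi {x2 h1} => [x1 x2] /= _ e; congr pair; apply: val_inj; rewrite /= inordK.
    exists (inord i); rewrite /= !inordK //; split => //.
    by rewrite (h1 ik) hc // /s -ex; apply/asboolP; rewrite ex.
  + move=> x Xx; have [i1 xi] := X'D x Xx.
    have x2 : (x.2 < N)%N by apply: hN; left; right.
    have [_ h1] := hb _ x2.
    have ik : (i.-1 < k.+1)%N by rewrite prednK // -ltnS.
    have ex : (inord i.-1, x.2) = x.
      by case: x Xx xi {x2 h1} => [x1 x2] /= _ e; congr pair; apply: val_inj; rewrite /= inordK // ltnW.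
    exists (inord i.-1); rewrite /= !inordK ?prednK //; split => //.
    by rewrite (h1 i1) hd // /t -ex; apply/asboolP; rewrite ex.
- move=> y Yy [i0 [h1 h2 h3]]; have [i1 yi] := YU y Yy.
  have y2 : (y.2 < N)%N by apply: hN; left; left; left; right.
  have [hh1 _] := hb _ y2.
  have ik : (i < k.+1)%N by rewrite -ltnS.
  have ei : i0 = inord i by apply: val_inj; rewrite /= inordK // -h1.
  have ex : (inord i.+1, y.2) = y.
    by case: y Yy yi {y2 h3 h2 hh1} => [x1 x2] /= _ e; congr pair; apply: val_inj; rewrite /= inordK.
  move: h3; rewrite ei /= (hh1 ik) hc // /s => /asboolP; rewrite ex => Xy.
  by have : (X `&` Y) y by []; rewrite XY.
- move=> y Yy [i0 [h1 h2 h3]]; have [i1 yi] := Y'D y Yy.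
  have y2 : (y.2 < N)%N by apply: hN; right.
  have [_ hh1] := hb _ y2.
  have ik : (i.-1 < k.+1)%N by rewrite prednK // -ltnS.
  have ei : i0 = inord i.-1.
    apply: val_inj; rewrite /= inordK //; move: h2; rewrite /= zi => ->; by [].
  have ex : (inord i.-1, y.2) = y.
    by case: y Yy yi {y2 h3 h2 hh1 h1} => [x1 x2] /= _ e; congr pair; apply: val_inj; rewrite /= inordK // ltnW.
  move: h3; rewrite ei /= (hh1 i1) hd // /t => /asboolP; rewrite ex => Xy.
  by have : (X' `&` Y') y by []; rewrite X'Y'.
Qed.

End Main.

Section Null.
Variable k : nat.
Variable psi : 'I_k.+1 * nat * nat -> nat.
Variable g : nat -> 'I_k.+1 * nat * nat.
Hypothesis gK : cancel psi g.

Definition Lf i N (s t : nat -> bool) n : seq (nat * bool) :=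
  (if (i < k.+1)%N then [seq (psi (inord i, n, m), s m) | m <- iota 0 N] else [::]) ++
  (if (0 < i)%N then [seq (psi (inord i.-1, m, n), t m) | m <- iota 0 N] else [::]).

Lemma Lf_mem i N s t n c : c \in Lf i N s t n ->
  (exists m, [/\ (i < k.+1)%N, (m < N)%N & c = (psi (inord i, n, m), s m)]) \/
  (exists m, [/\ (0 < i)%N, (m < N)%N & c = (psi (inord i.-1, m, n), t m)]).
Proof.
rewrite mem_cat => /orP [|]; case: ifP => // hi /mapP [m]; rewrite mem_iota add0n => mN ->.
  by left; exists m.
by right; exists m.
Qed.

Lemma psi_inj : injective psi. Proof. exact: can_inj gK. Qed.

Lemma Lf_cons i N s t n : consistent (Lf i N s t n).
Proof.
have ne : forall m m' n', (0 < i)%N -> (i < k.+1)%N -> psi (inord i, n, m) <> psi (inord i.-1, m', n').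
  move=> m m' n' i0 ik /psi_inj [] /(congr1 val) /=.
  have i1 : (i.-1 < k.+1)%N by apply: leq_ltn_trans ik; exact: leq_pred.
  rewrite !inordK // => e; lia.
move=> c c' /Lf_mem [[m [ik mN ->]]|[m [i0 mN ->]]] /Lf_mem [[m' [ik' mN' ->]]|[m' [i0' mN' ->]]] /=.
- by move/psi_inj => [] ->.
- by move=> /ne; rewrite -/(is_true _) => /(_ i0' ik).
- by move=> /esym /ne => /(_ i0 ik').
- by move/psi_inj => [] ->.
Qed.

Lemma Lf_size i N s t n : (size (Lf i N s t n) <= N + N)%N.
Proof.
rewrite size_cat leq_add //; case: ifP => _ //; by rewrite size_map size_iota.
Qed.

Lemma Lf_blk i N s t n a : Bset (Lf i N s t n) a -> blk k psi i N s t n a.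
Proof.
move/allP => h m mN; split => hi.
  have := h (psi (inord i, n, m), s m); rewrite mem_cat hi map_f ?mem_iota //.
  by move=> /(_ isT) /eqP.
have := h (psi (inord i.-1, m, n), t m); rewrite mem_cat hi map_f ?mem_iota ?orbT //.
by move=> /(_ isT) /eqP.
Qed.

Fixpoint bnd (M : nat) : nat :=
  if M is M'.+1 then maxn (bnd M') (maxn (g M').1.2 (g M').2).+1 else 0%N.

Lemma bnd_ok p M : (p < M)%N -> ((g p).1.2 < bnd M)%N /\ ((g p).2 < bnd M)%N.
Proof.
elim: M => // M IH; rewrite ltnS leq_eqVlt => /orP [/eqP ->|/IH [h1 h2]] /=.
  by split; rewrite !leq_max !ltnS !leq_max leqnn /= !orbT.
by split; rewrite !leq_max ?h1 ?h2.
Qed.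

Lemma Lf_far i N s t M c : c \in Lf i N s t (N + bnd M) -> (M <= c.1)%N.
Proof.
rewrite leqNgt; move=> /Lf_mem [[m [_ _ ->]]|[m [_ _ ->]]] /=; apply/negP => /bnd_ok; rewrite gK /=.
  by case=> h _; move: h; rewrite ltnNge leq_addl.
by case=> _ h; move: h; rewrite ltnNge leq_addl.
Qed.

End Null.

Lemma null_good (R : realType) (P : probability CantorM R) (hP : fair_coin P)
  k (psi : 'I_k.+1 * nat * nat -> nat) (g : nat -> 'I_k.+1 * nat * nat)
  (gK : cancel psi g) i N s t :
  P (~` good k psi i N s t) = 0%E.
Proof.
have mF : measurable (~` good k psi i N s t) by apply: measurableC; exact: good_meas.
rewrite (@prE R P _ mF) (@P7 R P hP _ (N + N) (Lf k psi i N s t) mF) //.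
- move=> n; exact: (@Lf_cons k psi g gK).
- move=> n; exact: Lf_size.
move=> M; exists (N + bnd k g M)%N; split; first by move=> c; exact: (@Lf_far k psi g gK).
move=> a Fa Ba; apply: Fa => _; exists (N + bnd k g M)%N; split; first exact: leq_addr.
exact: Lf_blk.
Qed.

Theorem lemma3 (l : nat) (hl : (2 <= l)%N)
  (psi : 'I_l.-1 * nat * nat -> nat) (hpsi : bijective psi)
  (R : realType) (P : probability CantorM R) (hP : fair_coin P) :
  measurable (Ggen psi) /\ P (Ggen psi) = 1%E.
Proof.
case: l hl psi hpsi => [|[|k]] // _ psi hpsi.
have [g gK _] := hpsi.
have Gdef : Ggen psi = \bigcap_i \bigcap_N \bigcap_c \bigcap_d good k psi i N (pat c) (pat d).
  apply/seteqP; split => a.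
    by move=> Ga i _ N _ c _ d _; exact: G_sub.
  by move=> H; apply: sub_G => i N c d; exact: H.
have mG : measurable (Ggen psi).
  by rewrite Gdef; do 4 (apply: bigcapT_measurable => ?); exact: good_meas.
split => //.
have nC : P (~` Ggen psi) = 0%E.
  apply/(negligibleP P (measurableC mG)).
  apply: (@negligibleS _ _ _ _ (\bigcup_i \bigcup_N \bigcup_c \bigcup_d ~` good k psi i N (pat c) (pat d))).
    move=> a /= nG; apply: contrapT => H; apply: nG; rewrite Gdef => i _ N _ c _ d _.
    apply: contrapT => ng; apply: H; exists i => //; exists N => //; exists c => //; by exists d.
  do 4 (apply: negligible_bigcup => ?).
  apply/(negligibleP P); first by apply: measurableC; exact: good_meas.
  exact: (@null_good R P hP k psi g gK).
have := probability_setC P mG; rewrite nC (@prE R P _ mG) => /eqP.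
rewrite eq_sym -EFinB eqe subr_eq0 => /eqP <-.
by [].
Qed.
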